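(* Let $\mathbf{d}$ be a finite sequence of nonnegative integers. Suppose that $$4\bigl(f(\mathbf{d})-1\bigr)B(\mathbf{d}) = \sum_{\mathbf{s}+\mathbf{t}=\mathbf{d}} v(\mathbf{s})v(\mathbf{t})B(\mathbf{s})B(\mathbf{t}) \quad\text{and}\quad \binom{f(\mathbf{d})-1}{2}B(\mathbf{d}) = \sum_{\mathbf{s}+\mathbf{t}=\mathbf{d}} \bigl(f(\mathbf{s})-1\bigr)\binom{v(\mathbf{t})}{2}B(\mathbf{s})B(\mathbf{t}).$$ Then $$\left((f(\mathbf{d})-1)\,v(\mathbf{d}) + \binom{f(\mathbf{d})-1}{2}\right)B(\mathbf{d}) = \sum_{\mathbf{s}+\mathbf{t}=\mathbf{d}} \bigl(v(\mathbf{s})+f(\mathbf{s})-1\bigr)\binom{v(\mathbf{t})}{2}B(\mathbf{s})B(\mathbf{t}),$$ equivalently $$\left(\binom{n(\mathbf{d})+1}{2}-\binom{v(\mathbf{d})}{2}\right)B(\mathbf{d}) = \sum_{\mathbf{s}+\mathbf{t}=\mathbf{d}} \bigl(1+n(\mathbf{s})\bigr)\binom{v(\mathbf{t})}{2}B(\mathbf{s})B(\mathbf{t}).$$ All sums run over ordered pairs $(\mathbf{s},\mathbf{t})$ of finite sequences of nonnegative integers with $\mathbf{s}+\mathbf{t}=\mathbf{d}$ componentwise.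
   Context: Maps are rooted planar maps (embeddings of finite connected multigraphs in the sphere up to orientation-preserving homeomorphism, with a distinguished half-edge). A map is bipartite if all its cycles have even length. For a finite sequence $\mathbf{d}=(d_1,d_2,\ldots)$ of nonnegative integers, $B(\mathbf{d})$ is the number of rooted planar bipartite maps with exactly $d_i$ faces of degree $2i$ for each $i$, with convention $B(\mathbf{0})=0$. Set $f(\mathbf{d})=\sum_i d_i$, $n(\mathbf{d})=\sum_i i\,d_i$, $v(\mathbf{d})=n(\mathbf{d})+2-f(\mathbf{d})$. *)

(* Defs.v *)
From mathcomp Require Import all_boot all_order all_algebra all_fingroup.
Set Implicit Arguments. Unset Strict Implicit. Unset Printing Implicit Defensive.

(* Face-degree sequences: d = [:: d_1; d_2; ...; d_k] as a seq nat,
   nth 0 d j = d_(j+1) = number of faces of degree 2(j+1). *)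

Definition fdeg (d : seq nat) : nat := sumn d.
Definition ndeg (d : seq nat) : nat :=
  \sum_(j < size d) (j.+1 * nth 0 d j).
Definition vdeg (d : seq nat) : nat := ndeg d + 2 - fdeg d.

(* Combinatorial (labelled) maps on the half-edge set 'I_m:
   sa.1 = vertex rotation sigma, sa.2 = edge involution alpha,
   faces = cycles of phi = sigma * alpha (i.e. x |-> alpha (sigma x)).
   The predicate says: alpha is a fixed-point-free involution, the map is
   connected, it is planar (Euler: V - E + F = 2, i.e. V + 2E + F = m + 2),
   it is bipartite (a proper 2-colouring of vertices exists), and it has
   exactly d_i faces of degree 2i for each i and no other faces. *)
Definition planar_bip_map (m : nat) (d : seq nat)
    (sa : {perm 'I_m} * {perm 'I_m}) : bool :=
  let s := sa.1 in let a := sa.2 in let phi := (s * a)%g in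
  [&& [forall x, a (a x) == x], [forall x, a x != x],
      [forall x, forall y, connect (fun u w => (w == s u) || (w == a u)) x y],
      #|porbits s| + #|porbits a| + #|porbits phi| == m + 2,
      [exists c : {ffun 'I_m -> bool},
          [forall x, (c (s x) == c x) && (c (a x) != c x)]],
      #|porbits phi| == sumn d &
      [forall j : 'I_(size d),
          #|[set F in porbits phi | #|F| == 2 * j.+1]| == nth 0 d j]].

(* Rooted maps have no nontrivial automorphisms, so the number of
   isomorphism classes of rooted maps with m = 2e half-edges equals the
   number of labelled maps on 'I_m divided by (m-1)!.
   The number of half-edges is forced: m = 2 n(d). *)
Definition Bmap (d : seq nat) : nat :=
  let m := 2 * ndeg d in
  if m == 0 then 0
  else #|[set sa | @planar_bip_map m d sa]| %/ (m.-1)`!.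

(* All s with 0 <= s_i <= d_i componentwise (same length as d);
   pairs (s, t) with s + t = d correspond to s <- splits d, t = dsub d s. *)
Fixpoint splits (d : seq nat) : seq (seq nat) :=
  match d with
  | [::] => [:: [::]]
  | x :: d' => [seq i :: s | i <- iota 0 x.+1, s <- splits d']
  end.

Definition dsub (d s : seq nat) : seq nat := [seq x.1 - x.2 | x <- zip d s].

(* Main.v *)
Require Import Defs.
From mathcomp Require Import all_boot all_order all_algebra all_fingroup.
From mathcomp Require Import zify ring.
Import GRing.Theory.
Local Open Scope ring_scope.

Lemma ndeg_cons x d : ndeg (x :: d) = (x + fdeg d + ndeg d)%N.
Proof.
rewrite /ndeg /fdeg /= big_ord_recl /= mul1n.
rewrite sumnE (big_nth 0) big_mkord -addnA; congr (_ + _)%N.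
rewrite -big_split /=; apply: eq_bigr => i _.
by rewrite /bump /= mulSn.
Qed.

Lemma ndeg_nil : ndeg [::] = 0%N.
Proof. by rewrite /ndeg big_ord0. Qed.

Lemma fdeg_cons x d : fdeg (x :: d) = (x + fdeg d)%N.
Proof. by []. Qed.

Lemma fdeg_le_ndeg d : (fdeg d <= ndeg d)%N.
Proof.
elim: d => [|x d IH]; first by rewrite ndeg_nil.
rewrite ndeg_cons fdeg_cons; lia.
Qed.

Lemma mem_splits_cons x d s :
  s \in splits (x :: d) -> exists i s', [/\ s = i :: s', (i <= x)%N & s' \in splits d].
Proof.
move=> /allpairsP [[i s'] [Hi Hs ->]].
exists i, s'; split => //; move: Hi; rewrite mem_iota /=; lia.
Qed.

Lemma splits_add d s : s \in splits d ->
  (fdeg s + fdeg (dsub d s))%N = fdeg d /\ (ndeg s + ndeg (dsub d s))%N = ndeg d.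
Proof.
elim: d s => [|x d IH] s.
  by rewrite inE => /eqP ->; rewrite /dsub /= ndeg_nil.
move=> /mem_splits_cons [i [s' [-> Hi Hs]]].
have [H1 H2] := IH _ Hs.
have -> : dsub (x :: d) (i :: s') = (x - i)%N :: dsub d s' by [].
rewrite !ndeg_cons !fdeg_cons; split; lia.
Qed.

Lemma splits_sym d (F : seq nat -> seq nat -> int) :
  \sum_(s <- splits d) F s (dsub d s) = \sum_(s <- splits d) F (dsub d s) s.
Proof.
elim: d F => [|x d IH] F; first by rewrite /= !big_cons !big_nil.
have Hs : splits (x :: d) = flatten [seq [seq i :: s | s <- splits d] | i <- iota 0 x.+1] by [].
have Hd : forall i s, dsub (x :: d) (i :: s) = (x - i)%N :: dsub d s by [].
have -> : \sum_(s <- splits (x :: d)) F s (dsub (x :: d) s) =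
   \sum_(0 <= i < x.+1) \sum_(s <- splits d) F (i :: dsub d s) ((x - i)%N :: s).
  rewrite Hs big_flatten big_map; apply: eq_bigr => i _.
  have := IH (fun s t => F (i :: t) ((x - i)%N :: s)); rewrite /= => ->.
  by rewrite big_map; apply: eq_bigr => s _; rewrite Hd.
have -> : \sum_(s <- splits (x :: d)) F (dsub (x :: d) s) s =
   \sum_(0 <= i < x.+1) \sum_(s <- splits d) F ((x - i)%N :: dsub d s) (i :: s).
  rewrite Hs big_flatten big_map; apply: eq_bigr => i _.
  by rewrite big_map; apply: eq_bigr => s _; rewrite Hd.
rewrite big_nat_rev /=; apply: eq_big_nat => i Hi.
apply: eq_bigr => s _.
by rewrite add0n subSS; have -> : (x - (x - i) = i)%N by lia.
Qed.

Lemma vdegZ s : (vdeg s)%:Z = (ndeg s)%:Z + 2 - (fdeg s)%:Z.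
Proof. rewrite /vdeg; have := fdeg_le_ndeg s; lia. Qed.

Lemma bin2Z n : 2 * ('C(n, 2))%:Z = n%:Z * (n%:Z - 1).
Proof.
elim: n => [|n IH]; first by [].
rewrite binS bin1.
have -> : (('C(n,2) + n)%N)%:Z = ('C(n,2))%:Z + n%:Z by lia.
have -> : (n.+1)%:Z = n%:Z + 1 by lia.
rewrite mulrDr IH; ring.
Qed.

Lemma int4K (x y : int) : 4 * x = 4 * y -> x = y.
Proof. lia. Qed.

Lemma keyK d :
  4%:Z * ((fdeg d)%:Z - 1) * (Bmap d)%:Z =
    \sum_(s <- splits d)
       ((vdeg s)%:Z * (vdeg (dsub d s))%:Z * (Bmap s)%:Z * (Bmap (dsub d s))%:Z) ->
  \sum_(s <- splits d) (vdeg s)%:Z * ('C(vdeg (dsub d s), 2))%:Z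
          * (Bmap s)%:Z * (Bmap (dsub d s))%:Z
  = ((fdeg d)%:Z - 1) * (vdeg d)%:Z * (Bmap d)%:Z.
Proof.
move=> H1.
pose F s t := (vdeg s)%:Z * (vdeg t)%:Z * ((vdeg t)%:Z - 1) * (Bmap s)%:Z * (Bmap t)%:Z.
have sym := splits_sym d F.
apply: int4K.
have E1 : 4 * \sum_(s <- splits d) (vdeg s)%:Z * ('C(vdeg (dsub d s), 2))%:Z
          * (Bmap s)%:Z * (Bmap (dsub d s))%:Z
   = \sum_(s <- splits d) (F s (dsub d s) + F (dsub d s) s).
  rewrite big_split /= -sym mulr_sumr -big_split; apply: eq_bigr => s _.
  rewrite /F.
  set a := (vdeg s)%:Z; set c := ('C(_, 2))%:Z; set b := (Bmap s)%:Z; set e := (Bmap _)%:Z.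
  rewrite [LHS](_ : _ = 2 * (a * b * e) * (2 * c)); last by ring.
  rewrite /c bin2Z /=; ring.
have E2 : \sum_(s <- splits d) (F s (dsub d s) + F (dsub d s) s)
   = \sum_(s <- splits d) (vdeg d)%:Z * ((vdeg s)%:Z * (vdeg (dsub d s))%:Z * (Bmap s)%:Z * (Bmap (dsub d s))%:Z).
  rewrite !big_seq; apply: eq_bigr => s Hs.
  have [Hf Hn] := splits_add d s Hs.
  have hv : (vdeg d)%:Z = (vdeg s)%:Z + (vdeg (dsub d s))%:Z - 2.
    rewrite !vdegZ -Hf -Hn !PoszD; ring.
  rewrite hv /F; ring.
rewrite E1 E2 -mulr_sumr -H1; ring.
Qed.

Theorem mainTheorem3 (d : seq nat) :
  4%:Z * ((fdeg d)%:Z - 1) * (Bmap d)%:Z =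
    \sum_(s <- splits d)
       ((vdeg s)%:Z * (vdeg (dsub d s))%:Z * (Bmap s)%:Z * (Bmap (dsub d s))%:Z) ->
  ('C(fdeg d - 1, 2))%:Z * (Bmap d)%:Z =
    \sum_(s <- splits d)
       (((fdeg s)%:Z - 1) * ('C(vdeg (dsub d s), 2))%:Z
          * (Bmap s)%:Z * (Bmap (dsub d s))%:Z) ->
  (((fdeg d)%:Z - 1) * (vdeg d)%:Z + ('C(fdeg d - 1, 2))%:Z) * (Bmap d)%:Z =
    \sum_(s <- splits d)
       ((vdeg s)%:Z + (fdeg s)%:Z - 1) * ('C(vdeg (dsub d s), 2))%:Z
          * (Bmap s)%:Z * (Bmap (dsub d s))%:Z
  /\
  (('C(ndeg d + 1, 2))%:Z - ('C(vdeg d, 2))%:Z) * (Bmap d)%:Z =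
    \sum_(s <- splits d)
       (1 + (ndeg s)%:Z) * ('C(vdeg (dsub d s), 2))%:Z
          * (Bmap s)%:Z * (Bmap (dsub d s))%:Z.
Proof.
move=> H1 H2.
have G1 : (((fdeg d)%:Z - 1) * (vdeg d)%:Z + ('C(fdeg d - 1, 2))%:Z) * (Bmap d)%:Z =
    \sum_(s <- splits d)
       ((vdeg s)%:Z + (fdeg s)%:Z - 1) * ('C(vdeg (dsub d s), 2))%:Z
          * (Bmap s)%:Z * (Bmap (dsub d s))%:Z.
  rewrite mulrDl H2 -(keyK d H1) -big_split; apply: eq_bigr => s _ /=; ring.
split => //.
have -> : \sum_(s <- splits d)
       (1 + (ndeg s)%:Z) * ('C(vdeg (dsub d s), 2))%:Z
          * (Bmap s)%:Z * (Bmap (dsub d s))%:Z =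
    \sum_(s <- splits d)
       ((vdeg s)%:Z + (fdeg s)%:Z - 1) * ('C(vdeg (dsub d s), 2))%:Z
          * (Bmap s)%:Z * (Bmap (dsub d s))%:Z.
  by apply: eq_bigr => s _; rewrite vdegZ; congr (_ * _ * _ * _); ring.
rewrite -G1.
have [f0|fpos] := eqVneq (fdeg d) 0%N.
  have Hge : 0 <= \sum_(s <- splits d)
       ((vdeg s)%:Z * (vdeg (dsub d s))%:Z * (Bmap s)%:Z * (Bmap (dsub d s))%:Z).
    by apply: Num.Theory.sumr_ge0 => s _; rewrite -!PoszM.
  have B0 : (Bmap d)%:Z = 0.
    move: Hge; rewrite -H1 f0; have := Num.Theory.normr_ge0 (Bmap d)%:Z; lia.
  by rewrite B0 !mulr0.
congr (_ * _).
apply: (@int4K _ _); apply: (_ : forall x y : int, 2 * x = 2 * y -> 4 * x = 4 * y); first by move=> x y h; lia.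
rewrite !mulrDr mulrN !bin2Z.
have hf : ((fdeg d - 1)%N)%:Z = (fdeg d)%:Z - 1 by lia.
rewrite hf vdegZ PoszD; ring.
Qed.
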